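(* Suppose $q$ is even. Let $\mathfrak q_1,\dots,\mathfrak q_s$ be distinct primes of $A$ ($s\ge0$), $e_1,\dots,e_s\ge1$, $\mathfrak m=\mathfrak q_1^{2e_1-1}\cdots\mathfrak q_s^{2e_s-1}$, and $\mathfrak n\in A$ coprime to $\mathfrak m$, such that $X^2+X-\mathfrak n/\mathfrak m$ is irreducible over $F$; let $K$ be its splitting field and $\mathcal O_K$ the integral closure of $A$ in $K$. Put $\mathcal D=\mathfrak q_1^{e_1}\cdots\mathfrak q_s^{e_s}$ and fix $\epsilon\in\mathbb F_q^\times$. Let $\alpha\in K$ be a root of $$f(X)=X^2+\epsilon\mathcal D X+\epsilon^2\mathfrak q_1\cdots\mathfrak q_s\mathfrak n.$$ Then $\mathcal O_K=A[\alpha]$.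
   Context: $A=\mathbb F_q[T]$, $F=\mathbb F_q(T)$, with $q$ a power of $2$; primes of $A$ are monic irreducible polynomials. (In the paper, $\mathcal D$ is identified with the different of $\mathcal O_K$ over $A$, and $\alpha=\epsilon\mathcal D\beta$ where $\beta^2+\beta=\mathfrak n/\mathfrak m$.) *)

(* Defs.v *)
From HB Require Import structures.
From mathcomp Require Import all_boot all_order all_algebra all_field.
Set Implicit Arguments. Unset Strict Implicit. Unset Printing Implicit Defensive.
Import GRing.Theory.
Local Open Scope ring_scope.

(* A = Fq[T] is {poly Fq}; F = Fq(T) is {fraction {poly Fq}}. *)
Definition fracA (Fq : finFieldType) : {poly Fq} -> {fraction {poly Fq}} :=
  fun a => FracField.tofrac a.

Definition embA (Fq : finFieldType) (L : fieldExtType {fraction {poly Fq}})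
  (a : {poly Fq}) : L := in_alg L (fracA a).

Definition integral_over_A (Fq : finFieldType)
  (L : fieldExtType {fraction {poly Fq}}) (x : L) : Prop :=
  exists p : {poly {poly Fq}}, p \is monic /\ root (map_poly (@embA Fq L) p) x.

Definition in_A_adjoin (Fq : finFieldType)
  (L : fieldExtType {fraction {poly Fq}}) (alpha x : L) : Prop :=
  exists p : {poly {poly Fq}}, x = (map_poly (@embA Fq L) p).[alpha].

(* Main.v *)
Require Import Defs.
From HB Require Import structures.
From mathcomp Require Import all_boot all_order all_algebra all_field.
From mathcomp Require Import ring zify.
Import GRing.Theory.
Local Open Scope ring_scope.
Lemma frac_repr (R : idomainType) (t : {fraction R}) :
  exists x y : R, y != 0 /\ t = FracField.tofrac x / FracField.tofrac y.
Proof.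
elim/quotW: t => r.
exists (\n_r), (\d_r); split; first exact: denom_ratioP.
have hd : FracField.tofrac (\d_r) != 0 by rewrite tofrac_eq0 denom_ratioP.
apply: (canRL (mulfK hd)).
unlock FracField.tofrac.
rewrite -[_ * _]/(FracField.mul _ _) !piE.
apply/eqmodP; rewrite /= FracField.equivfE /FracField.mulf /=.
rewrite !numden_Ratio ?mulr1 ?oner_eq0 ?mulf_neq0 ?denom_ratioP //.
by rewrite mulrC.
Qed.
Section S.
Variable R : idomainType.
Local Notation tf := (@FracField.tofrac R).
Lemma hom_horner (P : {poly R}) (x y : R) (d : nat) : y != 0 -> (size P <= d.+1)%N ->
  tf y ^+ d * (map_poly tf P).[tf x / tf y] =
  tf (\sum_(i < d.+1) P`_i * x ^+ i * y ^+ (d - i)).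
Proof.
move=> y0 sP.
have hy : tf y != 0 by rewrite tofrac_eq0.
have tfi : injective tf by move=> a b /eqP; rewrite tofrac_eq => /eqP.
have sPm : (size (map_poly tf P) <= d.+1)%N by rewrite size_map_inj_poly ?rmorph0.
rewrite (horner_coef_wide _ sPm) mulr_sumr rmorph_sum.
apply: eq_bigr => i _; rewrite coef_map /= !rmorphM rmorphXn /= exprMn exprVn.
have hi : (i <= d)%N by rewrite -ltnS.
have -> : tf y ^+ d = tf y ^+ (d - i) * tf y ^+ i by rewrite -exprD subnK.
have hyi : tf y ^+ i != 0 by rewrite expf_neq0.
rewrite rmorphXn /=.
have E : tf P`_i * (tf x ^+ i / tf y ^+ i) * tf y ^+ i = tf P`_i * tf x ^+ i by rewrite mulrA mulfVK.
by rewrite -mulrA (mulrC (tf y ^+ i)) E mulrC.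
Qed.
End S.
Section S2.
Variable K : fieldType.
Local Notation tf := (@FracField.tofrac {poly K}).
Lemma frac_int_in (P : {poly {poly K}}) (t : {fraction {poly K}}) :
  P \is monic -> root (map_poly tf P) t -> exists u, t = tf u.
Proof.
move=> mP rP.
have [x [y [y0 Et]]] := @frac_repr _ t.
set g := gcdp x y.
have g0 : g != 0 by rewrite gcdp_eq0 negb_and y0 orbT.
set x' := x %/ g; set y' := y %/ g.
have Ex : x = x' * g by rewrite divpK // dvdp_gcdl.
have Ey : y = y' * g by rewrite divpK // dvdp_gcdr.
have y'0 : y' != 0 by apply: contraNneq y0 => Ey'; rewrite Ey Ey' mul0r.
have cop : coprimep x' y' by apply: coprimep_div_gcd; rewrite y0 orbT.
have hg : tf g != 0 by rewrite tofrac_eq0.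
have Et' : t = tf x' / tf y'.
  by rewrite Et Ex Ey !rmorphM /= invfM mulrACA divff // mulr1.
set d := (size P).-1.
have sP : size P = d.+1 by rewrite /d prednK // lt0n size_poly_eq0 monic_neq0.
have := @hom_horner _ P x' y' d y'0 (eq_leq sP).
rewrite -Et' (rootP rP) mulr0 => /esym/eqP; rewrite tofrac_eq0 => /eqP.
rewrite big_ord_recr /= subnn expr0 mulr1.
have -> : P`_d = 1 by move/monicP: mP; rewrite lead_coefE sP.
rewrite mul1r => /eqP; rewrite addr_eq0 => /eqP Exd.
have dv : y' %| x' ^+ d.
  rewrite -[x' ^+ d]opprK -Exd dvdpNr; apply: (big_ind (fun p => y' %| p)); [exact: dvdp0 | exact: dvdp_add | ].
  move=> i _; apply: dvdp_mull; apply: dvdp_exp; last exact: dvdpp.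
  by rewrite subn_gt0.
have cop2 : coprimep y' (x' ^+ d) by apply: coprimep_expr; rewrite coprimep_sym.
have /coprimepP /(_ y' (dvdpp _) dv) := cop2.
move=> /eqp_size; rewrite size_poly1 => /eqP /size_poly1P [c c0 Ec].
exists (c^-1 *: x'); rewrite Et' Ec; apply: (canLR (mulfK _)).
  by rewrite tofrac_eq0 polyC_eq0.
by rewrite -rmorphM /= mulrC mul_polyC scalerA mulfV // scale1r.
Qed.
End S2.

Set Implicit Arguments. Unset Strict Implicit.
Section S3.
Variable K : fieldType.
Implicit Types q a b : {poly K}.
Lemma irr_prime q a b : irreducible_poly q -> q %| a * b -> (q %| a) \/ (q %| b).
Proof.
move=> iq hab; case qa: (q %| a); [by left | right].
have cq : coprimep q a by rewrite irreducible_poly_coprime // qa.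
by rewrite -(Gauss_dvdpr _ cq).
Qed.

Lemma local_div q D Q' n (e : nat) : irreducible_poly q -> q %| D ->
  ~~ (q %| Q') -> ~~ (q %| n) -> forall r u,
  q ^+ (2 * e) %| r ^+ 2 + D * r * u + q * Q' * n * u ^+ 2 ->
  (q ^+ e %| r) /\ (q ^+ e %| u).
Proof.
move=> iq qD qQ qn; elim: e => [|e IH] r u.
  by rewrite !expr0 !dvd1p.
move=> H.
have q0 : q != 0 by apply: irredp_neq0.
have H2 : q ^+ 2 %| r ^+ 2 + D * r * u + q * Q' * n * u ^+ 2.
  by apply: dvdp_trans H; apply: dvdp_exp2l; rewrite mulnS.
have qr : q %| r.
  have : q %| r ^+ 2 + D * r * u + q * Q' * n * u ^+ 2.
    by apply: dvdp_trans H2; apply: dvdp_exp; last exact: dvdpp.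
  rewrite -addrA dvdp_addl; last first.
    apply: dvdp_add; first by rewrite -mulrA dvdp_mulr.
    by rewrite -!mulrA dvdp_mulr // dvdpp.
  by rewrite expr2 => /(irr_prime iq) [].
have Er : r = (r %/ q) * q by rewrite divpK.
set r2 := r %/ q in Er.
have qu : q %| u.
  move: H2; rewrite Er -addrA dvdp_addr; last by rewrite exprMn mulrC dvdp_mulr.
  have h1 : q ^+ 2 %| D * (r2 * q) * u.
    have -> : D * (r2 * q) * u = (D * (r2 * u)) * q by ring.
    by rewrite expr2 dvdp_mul // dvdp_mulr.
  rewrite (dvdp_addr _ h1).
  have -> : q * Q' * n * u ^+ 2 = q * (Q' * n * u ^+ 2) by ring.
  rewrite expr2 dvdp_mul2l // => /irr_prime-/(_ iq) [|].
    by move/irr_prime=> /(_ iq) [] h; [rewrite h in qQ | rewrite h in qn].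
  by rewrite expr2 => /irr_prime=> /(_ iq) [].
have Eu : u = (u %/ q) * q by rewrite divpK.
set u2 := u %/ q in Eu.
have [h3 h4] : q ^+ e %| r2 /\ q ^+ e %| u2.
  apply: IH; move: H; rewrite Er Eu.
  have -> : (r2 * q) ^+ 2 + D * (r2 * q) * (u2 * q) + q * Q' * n * (u2 * q) ^+ 2 =
     (r2 ^+ 2 + D * r2 * u2 + q * Q' * n * u2 ^+ 2) * q ^+ 2 by ring.
  by rewrite mulnS exprD mulrC dvdp_mul2r // expf_neq0.
by rewrite Er Eu exprSr !dvdp_mul.
Qed.
End S3.

Section Glob.
Variables (K : fieldType) (s : nat) (qs : 'I_s -> {poly K}) (e : 'I_s -> nat).
Hypotheses (Hqmon : forall i, qs i \is monic)
  (Hqirr : forall i, irreducible_poly (qs i)) (Hqdist : injective qs).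

Lemma qs_ndvd i j : i != j -> ~~ (qs i %| qs j).
Proof.
move=> ij; apply/negP => h.
have := (Hqirr j).2 _ _ h; rewrite neq_ltn (Hqirr i).1 orbT => /(_ isT).
by rewrite eqp_monic // => /eqP /Hqdist /eqP; rewrite (negbTE ij).
Qed.

Lemma qs_ndvd1 i : ~~ (qs i %| 1).
Proof. by rewrite dvdp1 neq_ltn (Hqirr i).1 orbT. Qed.

Lemma qs_ndvd_prod i (l : seq 'I_s) : i \notin l -> ~~ (qs i %| \prod_(j <- l) qs j).
Proof.
move=> il; rewrite big_seq; apply: (big_rec (fun x => ~~ (qs i %| x))).
  exact: qs_ndvd1.
move=> j x jl hx; apply/negP => /(irr_prime (Hqirr i)) [].
  by apply/negP/qs_ndvd; apply: contraNneq il => ->.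
exact/negP.
Qed.

Lemma qs_coprime_prod i a (l : seq 'I_s) : i \notin l ->
  coprimep (qs i ^+ a) (\prod_(j <- l) qs j ^+ e j).
Proof.
move=> il; rewrite big_seq; apply: (big_rec (fun x => coprimep (qs i ^+ a) x)).
  exact: coprimep1.
move=> j x jl hx; rewrite coprimepMr hx andbT.
apply: coprimep_expl; apply: coprimep_expr.
rewrite irreducible_poly_coprime //; apply: qs_ndvd.
by apply: contraNneq il => ->.
Qed.

Lemma prod_dvd (r : {poly K}) : (forall i, qs i ^+ e i %| r) ->
  \prod_i qs i ^+ e i %| r.
Proof.
move=> h.
have : uniq (index_enum 'I_s) by rewrite index_enum_uniq.
elim: (index_enum 'I_s) => [|i l IH]; first by rewrite big_nil dvd1p.
rewrite /= big_cons => /andP [il ul].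
by rewrite Gauss_dvdp ?h ?IH // qs_coprime_prod.
Qed.

Lemma qs_ndvdP i : ~~ (qs i %| \prod_(j | j != i) qs j).
Proof.
apply: (big_rec (fun x => ~~ (qs i %| x))); first exact: qs_ndvd1.
move=> j x jl hx; apply/negP => /(irr_prime (Hqirr i)) [].
  by apply/negP/qs_ndvd; rewrite eq_sym.
exact/negP.
Qed.

Lemma glob_div (n r u : {poly K}) :
  (forall i, 1 <= e i)%N ->
  coprimep n (\prod_i qs i ^+ (2 * e i - 1)) ->
  (\prod_i qs i ^+ e i) ^+ 2 %| r ^+ 2 + (\prod_i qs i ^+ e i) * r * u
       + (\prod_i qs i) * n * u ^+ 2 ->
  (\prod_i qs i ^+ e i %| r) /\ (\prod_i qs i ^+ e i %| u).
Proof.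
move=> He cop H.
suff hh : forall i, (qs i ^+ e i %| r) /\ (qs i ^+ e i %| u).
  by split; apply: prod_dvd => i; case: (hh i).
move=> i.
have qD : qs i %| \prod_i qs i ^+ e i.
  by rewrite (bigD1 i) //= dvdp_mulr // dvdp_exp // dvdpp.
have qn : ~~ (qs i %| n).
  apply/negP => qn.
  have qm : qs i %| \prod_i qs i ^+ (2 * e i - 1).
    rewrite (bigD1 i) //= dvdp_mulr // dvdp_exp ?dvdpp //.
    by have := He i; lia.
  have /eqp_size := coprimepP _ _ cop _ qn qm.
  by rewrite size_poly1 => h; have := (Hqirr i).1; rewrite h.
apply: (local_div (Hqirr i) qD (qs_ndvdP i) qn).
have <- : \prod_j qs j = qs i * \prod_(j | j != i) qs j by rewrite (bigD1 i).
apply: dvdp_trans H.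
by rewrite mulnC exprM dvdp_exp2r // (bigD1 i) //= dvdp_mulr.
Qed.
End Glob.


Lemma irr_noroot (F : fieldType) (p : {poly F}) (t : F) :
  irreducible_poly p -> size p = 3 -> ~~ root p t.
Proof.
move=> ip sp; apply/negP; rewrite -dvdp_XsubCl => h.
have := ip.2 _ _ h; rewrite size_XsubC => /(_ isT) /eqp_size.
by rewrite size_XsubC sp.
Qed.

Lemma size_AS (F : fieldType) (c : F) : size ('X^2 + 'X - c%:P : {poly F}) = 3.
Proof.
rewrite -addrA size_addl; rewrite ?size_XsubC size_polyXn //.
Qed.

Section Main.
Variables (F : fieldType) (L : fieldExtType F).
Local Notation iota := (in_alg L).
Variables (delta kappa c : F) (alpha : L).
Hypotheses (h2 : (2%:R : F) = 0) (hd : delta != 0) (hk : kappa = c * delta ^+ 2)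
  (Hirr : irreducible_poly ('X^2 + 'X - c%:P))
  (Halpha : alpha ^+ 2 + iota delta * alpha + iota kappa = 0).

Lemma char2F (x : F) : x + x = 0.
Proof. by rewrite -mulr2n -mulr_natr h2 mulr0. Qed.
Lemma char2L (x : L) : x + x = 0.
Proof. by rewrite -mulr2n -mulr_natr -(rmorph_nat iota) h2 rmorph0 mulr0. Qed.
Lemma oppF (x : F) : - x = x.
Proof. by apply/eqP; rewrite eq_sym -subr_eq0 opprK char2F. Qed.
Lemma oppL (x : L) : - x = x.
Proof. by apply/eqP; rewrite eq_sym -subr_eq0 opprK char2L. Qed.

Lemma notinF (a b : F) : iota a + iota b * alpha = 0 -> a = 0 /\ b = 0.
Proof.
have iinj : injective iota := fmorph_inj _.
move=> h; have [b0|b0] := eqVneq b 0.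
  move: h; rewrite b0 rmorph0 mul0r addr0 => /eqP; rewrite fmorph_eq0 => /eqP.
  by [].
exfalso.
have ha : alpha = iota (- a / b).
  have hb : iota b != 0 by rewrite fmorph_eq0.
  have e1 : iota b * alpha = - iota a by apply/eqP; rewrite -addr_eq0 addrC h.
  by rewrite fmorph_div rmorphN /= -e1 mulrC mulKf.
move: (- a / b) ha => t ha.
have ht : t ^+ 2 + delta * t + kappa = 0.
  by apply: iinj; rewrite rmorph0 -Halpha ha !rmorphD rmorphXn !rmorphM.
have : root ('X^2 + 'X - c%:P) (t / delta).
  rewrite rootE !hornerE.
  have -> : (t / delta) ^+ 2 + t / delta - c = (t ^+ 2 + delta * t + kappa) / delta ^+ 2 - (kappa + kappa) / delta ^+ 2.
    rewrite hk; field; exact: hd.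
  by rewrite ht char2F !mul0r subr0.
by apply/negP/irr_noroot; rewrite ?size_AS.
Qed.

Local Notation f := ('X^2 + delta *: 'X + kappa%:P : {poly F}).

Lemma size_f : size f = 3.
Proof.
rewrite -addrA size_addl ?size_polyXn //.
by rewrite (leq_ltn_trans (size_add _ _)) // size_polyC size_scale // size_polyX; case: (kappa != 0).
Qed.

Lemma modf_at (y : L) (P : {poly F}) : (map_poly iota f).[y] = 0 ->
  (map_poly iota P).[y] = iota (P %% f)`_0 + iota (P %% f)`_1 * y.
Proof.
move=> hy.
rewrite {1}(divp_eq P f) rmorphD rmorphM /= hornerD hornerM hy mulr0 add0r.
have sr : (size (map_poly iota (P %% f)) <= 2)%N.
  by rewrite size_map_poly -ltnS (leq_trans _ (eq_leq size_f)) // ltn_modp -size_poly_eq0 size_f.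
rewrite (horner_coef_wide _ sr) big_ord_recr big_ord_recr big_ord0 /= add0r.
by rewrite !coef_map /= expr0 expr1 mulr1.
Qed.

Lemma f_alpha : (map_poly iota f).[alpha] = 0.
Proof.
rewrite !rmorphD /= map_polyXn map_polyZ map_polyX map_polyC !hornerE /=; exact: Halpha.
Qed.

Lemma f_alpha' : (map_poly iota f).[alpha + iota delta] = 0.
Proof.
rewrite !rmorphD /= map_polyXn map_polyZ map_polyX map_polyC !hornerE /=.
change ((alpha + iota delta) ^+ 2 + iota delta * (alpha + iota delta) + iota kappa = 0).
rewrite -[RHS]Halpha.
have -> : (alpha + iota delta) ^+ 2 + iota delta * (alpha + iota delta) + iota kappa =
  alpha ^+ 2 + iota delta * alpha + iota kappa + ((iota delta * alpha + iota delta * alpha) + (iota delta ^+ 2 + iota delta ^+ 2)) by ring.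
by rewrite !char2L !addr0.
Qed.

Lemma conj_root (P : {poly F}) : (map_poly iota P).[alpha] = 0 ->
  (map_poly iota P).[alpha + iota delta] = 0.
Proof.
rewrite (modf_at _ f_alpha) (modf_at _ f_alpha') => /notinF [-> ->].
by rewrite rmorph0 mul0r addr0.
Qed.

Lemma repr_L (HK : splittingFieldFor 1%VS (map_poly iota ('X^2 + 'X - c%:P)) fullv)
  (x : L) : exists a b, x = iota a + iota b * alpha.
Proof.
have hdL : iota delta != 0 by rewrite fmorph_eq0.
set beta := iota delta^-1 * alpha.
have hb : beta ^+ 2 + beta + iota c = 0.
  have H := Halpha; rewrite hk rmorphM rmorphXn /= in H.
  have -> : beta ^+ 2 + beta + iota c =
    (alpha ^+ 2 + iota delta * alpha + iota c * iota delta ^+ 2) / iota delta ^+ 2.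
    by rewrite /beta fmorphV; field.
  by rewrite H mul0r.
have inV z : root (map_poly iota ('X^2 + 'X - c%:P)) z -> z \in <<1; alpha>>%VS.
  rewrite rmorphB rmorphD /= map_polyXn map_polyX map_polyC rootE !hornerE /= => hz.
  have E : (z - beta) * (z - beta - 1) = (z ^+ 2 + z - iota c) - (beta ^+ 2 + beta + iota c)
     + ((beta ^+ 2 + beta ^+ 2) + (beta + beta) + (iota c + iota c) - (z * beta + z * beta) - (z + z)).
    by ring.
  move: E; rewrite !char2L hb (eqP hz) !subrr addr0 => /eqP.
  rewrite mulf_eq0 => /orP [] /eqP h.
    have -> : z = beta by apply/eqP; rewrite -subr_eq0 h.
    by rewrite /beta mulr_algl memvZ // memv_adjoin.
  have -> : z = beta + 1 by apply/eqP; rewrite -subr_eq0 opprD addrA h.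
  by rewrite memvD ?mem1v // /beta mulr_algl memvZ // memv_adjoin.
case: HK => rs Hp Hv.
have : x \in <<1; alpha>>%VS.
  apply: (subvP (_ : fullv <= _)%VS); last exact: memvf.
  rewrite -Hv; apply/Fadjoin_seqP; split; first exact: sub1v.
  move=> z zrs; apply: inV; rewrite (eqp_root Hp) root_prod_XsubC //.
case/Fadjoin1_polyP => P ->.
exists (P %% f)`_0, (P %% f)`_1; exact: modf_at f_alpha.
Qed.
End Main.


Section Int.
Variables (Fq : finFieldType) (L : fieldExtType {fraction {poly Fq}}).
Local Notation tf := (@FracField.tofrac {poly Fq}).
Local Notation iota := (in_alg L).
Definition embR : {rmorphism {poly Fq} -> L} := (in_alg L \o @FracField.tofrac _).

Lemma int_equiv (x : L) : integral_over_A x <-> integralOver embR x.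
Proof. by split => [[p [mp rp]]|[p mp rp]]; exists p. Qed.

Lemma int_inF (t : {fraction {poly Fq}}) : integralOver embR (iota t) -> exists u, t = tf u.
Proof.
case=> p mp rp; apply: (@frac_int_in _ p).
  exact: mp.
move: rp; rewrite /root.
have -> : map_poly embR p = map_poly iota (map_poly tf p) by rewrite -map_poly_comp.
by rewrite horner_map fmorph_eq0.
Qed.

Lemma comp_eval (P : {poly {poly Fq}}) (a b : {fraction {poly Fq}}) (y : L) :
  (map_poly iota (map_poly tf P \Po (a%:P + b *: 'X))).[y] =
  (map_poly embR P).[iota a + iota b * y].
Proof.
rewrite map_comp_poly horner_comp -map_poly_comp.
congr (_.[_]).
by rewrite rmorphD /= map_polyC map_polyZ map_polyX !hornerE.
Qed.

Variables (delta kappa c : {fraction {poly Fq}}) (alpha : L).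
Hypotheses (h2 : (2%:R : {fraction {poly Fq}}) = 0) (hd : delta != 0)
  (hk : kappa = c * delta ^+ 2)
  (Hirr : irreducible_poly ('X^2 + 'X - c%:P))
  (Halpha : alpha ^+ 2 + iota delta * alpha + iota kappa = 0).

Lemma trace_norm a b : integralOver embR (iota a + iota b * alpha) ->
  (exists u, b * delta = tf u) /\ (exists u, a ^+ 2 + a * b * delta + b ^+ 2 * kappa = tf u).
Proof.
move=> ix; have ix0 := ix; case: ix0 => P mP rP.
have ix' : integralOver embR (iota a + iota b * (alpha + iota delta)).
  exists P => //; rewrite /root -comp_eval; apply/eqP.
  apply: (conj_root h2 hd hk Hirr Halpha).
  by rewrite comp_eval; apply/eqP.
split; apply: int_inF.
  have -> : iota (b * delta) = (iota a + iota b * alpha) + (iota a + iota b * (alpha + iota delta)).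
    have -> : (iota a + iota b * alpha) + (iota a + iota b * (alpha + iota delta)) =
       (iota a + iota a) + (iota b * alpha + iota b * alpha) + iota b * iota delta by ring.
    by rewrite !(char2L h2) !add0r rmorphM.
  exact: integral_add.
have -> : iota (a ^+ 2 + a * b * delta + b ^+ 2 * kappa) =
   (iota a + iota b * alpha) * (iota a + iota b * (alpha + iota delta)).
  have -> : (iota a + iota b * alpha) * (iota a + iota b * (alpha + iota delta)) =
     (iota a ^+ 2 + iota a * iota b * iota delta + iota b ^+ 2 * iota kappa)
     + (iota a * iota b * alpha + iota a * iota b * alpha)
     + iota b ^+ 2 * (alpha ^+ 2 + iota delta * alpha + iota kappa)
     - iota b ^+ 2 * (iota kappa + iota kappa) by ring.
  rewrite Halpha !(char2L h2) !mulr0 subr0 !addr0 !rmorphD !rmorphM; rewrite !expr2; reflexivity.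
exact: integral_mul.
Qed.
End Int.

Unset Implicit Arguments. Set Strict Implicit.

Local Notation tf := (@FracField.tofrac _).

Theorem lemma5p1
  (Fq : finFieldType) (char2 : 2%N \in [pchar Fq])
  (L : fieldExtType {fraction {poly Fq}})
  (s : nat) (qs : 'I_s -> {poly Fq}) (e : 'I_s -> nat)
  (Hqmon : forall i, qs i \is monic)
  (Hqirr : forall i, irreducible_poly (qs i))
  (Hqdist : injective qs)
  (He : forall i, (1 <= e i)%N)
  (n : {poly Fq})
  (Hcop : coprimep n (\prod_(i < s) qs i ^+ (2 * e i - 1)))
  (Hirr : irreducible_poly
            ('X^2 + 'X - (fracA n / fracA (\prod_(i < s) qs i ^+ (2 * e i - 1)))%:P))
  (HK : splittingFieldFor 1%VS
          (map_poly (in_alg L)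
            ('X^2 + 'X - (fracA n / fracA (\prod_(i < s) qs i ^+ (2 * e i - 1)))%:P))
          fullv)
  (eps : Fq) (Heps : eps != 0)
  (alpha : L)
  (Halpha : alpha ^+ 2
            + embA L (eps%:P * \prod_(i < s) qs i ^+ e i) * alpha
            + embA L ((eps ^+ 2)%:P * (\prod_(i < s) qs i) * n) = 0) :
  forall x : L, integral_over_A x <-> in_A_adjoin alpha x.
Proof.
set D := \prod_(i < s) qs i ^+ e i.
set Q := \prod_(i < s) qs i.
set m := \prod_(i < s) qs i ^+ (2 * e i - 1).
set delta := tf (eps%:P * D).
set kappa := tf ((eps ^+ 2)%:P * Q * n).
set c := fracA n / fracA m.
have tfi : injective (@FracField.tofrac {poly Fq}) by move=> u v /eqP; rewrite tofrac_eq => /eqP.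
have h2 : (2%:R : {fraction {poly Fq}}) = 0.
  by rewrite -(rmorph_nat tf) -(rmorph_nat (@polyC Fq)) (pcharf0 char2) /= !rmorph0.
have D0 : D != 0.
  apply: (big_ind (fun p => p != 0)); first exact: oner_neq0.
    by move=> u v; apply: mulf_neq0.
  by move=> i _; rewrite expf_neq0 // irredp_neq0.
have m0 : m != 0.
  apply: (big_ind (fun p => p != 0)); first exact: oner_neq0.
    by move=> u v; apply: mulf_neq0.
  by move=> i _; rewrite expf_neq0 // irredp_neq0.
have epsP : eps%:P != 0 by rewrite polyC_eq0.
have hd : delta != 0 by rewrite /delta tofrac_eq0 mulf_neq0.
have QmD : Q * m = D ^+ 2.
  rewrite /Q /m /D -big_split /= -prodrXl; apply: eq_bigr => i _.
  by rewrite -exprS -exprM mulnC; congr (_ ^+ _); have := He i; lia.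
have hk : kappa = c * delta ^+ 2.
  rewrite /c /fracA.
  apply: (mulIf (_ : tf m != 0)); first by rewrite tofrac_eq0.
  rewrite mulrAC divfK ?tofrac_eq0 // /kappa /delta -!rmorphXn -!rmorphM.
  congr (tf _); rewrite exprMn -QmD (rmorphXn (@polyC Fq)); ring.
have Ha : alpha ^+ 2 + in_alg L delta * alpha + in_alg L kappa = 0 := Halpha.
have Hai : integralOver (embR L) alpha.
  exists ('X^2 + (eps%:P * D) *: 'X + ((eps ^+ 2)%:P * Q * n)%:P).
    rewrite -addrA monicE lead_coefDl ?lead_coefXn //.
    rewrite size_polyXn (leq_ltn_trans (size_add _ _)) //.
    rewrite size_polyC gtn_max (leq_ltn_trans (size_scale_leq _ _)) ?size_polyX //; by case: (_ != 0).
  rewrite /root !rmorphD /= map_polyXn map_polyZ map_polyX map_polyC !hornerE /=.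
  by apply/eqP; exact: Ha.
move=> x; split; last first.
  case=> p ->; apply/int_equiv.
  change (integralOver (embR L) (map_poly (embR L) p).[alpha]).
  apply: integral_horner => //.
  by apply/integral_poly => i; rewrite coef_map; exact: integral_id.
move/int_equiv => ix.
have [a [b Ex]] := repr_L h2 hd hk Ha HK x.
rewrite Ex in ix.
have [[U0 hU] [N0 hN]] := trace_norm h2 hd hk Hirr Ha ix.
have ixa : integralOver (embR L) (in_alg L (b * kappa) + in_alg L (a + b * delta) * alpha).
  have -> : in_alg L (b * kappa) + in_alg L (a + b * delta) * alpha =
     (in_alg L a + in_alg L b * alpha) * alpha.
    rewrite !rmorphD !rmorphM /=.
    have -> : (in_alg L a + in_alg L b * alpha) * alpha =
       in_alg L b * in_alg L kappa + (in_alg L a + in_alg L b * in_alg L delta) * alpha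
       + in_alg L b * (alpha ^+ 2 + in_alg L delta * alpha + in_alg L kappa)
       - in_alg L b * (in_alg L kappa + in_alg L kappa)
       - in_alg L b * (in_alg L delta * alpha + in_alg L delta * alpha) by ring.
    by rewrite Ha !(char2L h2) !mulr0 !subr0 addr0.
  exact: integral_mul.
have [[T0 hT] _] := trace_norm h2 hd hk Hirr Ha ixa.
have [R0 haR] : exists R0, a * delta = tf R0.
  exists (T0 - U0 * (eps%:P * D)).
  rewrite rmorphB rmorphM /= -/delta -hT -hU; ring.
have EqA : R0 ^+ 2 + (eps%:P * D) * R0 * U0 + ((eps ^+ 2)%:P * Q * n) * U0 ^+ 2
         = (eps%:P * D) ^+ 2 * N0.
  have E1 : tf (R0 ^+ 2 + (eps%:P * D) * R0 * U0 + ((eps ^+ 2)%:P * Q * n) * U0 ^+ 2)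
     = tf R0 ^+ 2 + delta * tf R0 * tf U0 + kappa * tf U0 ^+ 2.
    by rewrite /delta /kappa !rmorphD !rmorphM ?rmorphXn; ring.
  have E2 : tf ((eps%:P * D) ^+ 2 * N0) = delta ^+ 2 * tf N0.
    by rewrite /delta !rmorphM ?rmorphXn; ring.
  apply: tfi; rewrite E1 E2 -haR -hU -hN; ring.
have e2 : (eps ^+ 2)%:P = eps%:P ^+ 2 by rewrite (rmorphXn (@polyC Fq)).
have Eq2 : R0 ^+ 2 + D * R0 * (eps%:P * U0) + Q * n * (eps%:P * U0) ^+ 2
   = D ^+ 2 * (eps%:P ^+ 2 * N0).
  have -> : R0 ^+ 2 + D * R0 * (eps%:P * U0) + Q * n * (eps%:P * U0) ^+ 2 =
     R0 ^+ 2 + (eps%:P * D) * R0 * U0 + ((eps ^+ 2)%:P * Q * n) * U0 ^+ 2 by rewrite e2; ring.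
  by rewrite EqA; ring.
have [Dr Du] : (D %| R0) /\ (D %| eps%:P * U0).
  apply: (glob_div Hqmon Hqirr Hqdist He Hcop).
  by rewrite Eq2 dvdp_mulIl.
have ie : (eps^-1)%:P * eps%:P = 1 by rewrite -polyCM mulVf.
have ea : a = tf ((eps^-1)%:P * (R0 %/ D)).
  apply: (mulIf hd); rewrite haR {1}(esym (divpK Dr)) /delta -rmorphM; congr (tf _).
  by rewrite -[LHS]mul1r -ie; ring.
have eb : b = tf ((eps^-1)%:P ^+ 2 * ((eps%:P * U0) %/ D)).
  apply: (mulIf hd); rewrite hU /delta -rmorphM; congr (tf _).
  have -> : (eps^-1)%:P ^+ 2 * ((eps%:P * U0) %/ D) * (eps%:P * D) =
     (eps^-1)%:P ^+ 2 * eps%:P * ((eps%:P * U0) %/ D * D) by ring.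
  have ie2 : (eps^-1)%:P ^+ 2 * eps%:P ^+ 2 = 1 by rewrite -exprMn ie expr1n.
  by rewrite divpK // -[LHS]mul1r -ie2; ring.
move: ((eps^-1)%:P * (R0 %/ D)) ((eps^-1)%:P ^+ 2 * ((eps%:P * U0) %/ D)) ea eb => A0 B0 ea eb.
rewrite Ex; exists (A0%:P + B0%:P * 'X).
change (in_alg L a + in_alg L b * alpha = (map_poly (embR L) (A0%:P + B0%:P * 'X)).[alpha]).
rewrite rmorphD rmorphM /= !map_polyC map_polyX !hornerE ea eb; reflexivity.
Qed.
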